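(* Let $\mathcal L=\langle +,<,0,P\rangle$ with $P$ a unary predicate, and for each $n\in\mathbb N$ let $\mathbb Q_n$ be the $\mathcal L$-structure $(\mathbb Q,+,<,0,\{0,1,\dots,n\})$ (interpreting $P$ as $\{0,\dots,n\}$). Let $\mathcal F$ be a non-principal ultrafilter on $\mathbb N$ and $\mathcal G=\prod_n\mathbb Q_n/\mathcal F$. Then $\mathcal G$ satisfies the scheme DCI but is not o-minimal.
   Context: For an $\mathcal L$-formula $\varphi(v,\bar w)$, $\mathrm{DCI}_\varphi$ is the sentence $\forall\bar w\Big(\big(\exists s\,\forall v<s\,\varphi(v,\bar w)\ \wedge\ \forall v\big(\forall s<v\,\varphi(s,\bar w)\to\exists u>v\,\forall s<u\,\varphi(s,\bar w)\big)\big)\to\forall v\,\varphi(v,\bar w)\Big)$, and DCI is the scheme $\{\mathrm{DCI}_\varphi:\varphi(v,\bar w)\text{ an }\mathcal L\text{-formula}\}$. A linearly ordered structure is o-minimal if every subset definable (with parameters) is a finite union of open intervals and points. *)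

(* Defs.v *)
From mathcomp Require Import all_boot all_order all_algebra.
From Stdlib Require List.
Unset Printing Implicit Defensive.
Import Order.TTheory GRing.Theory Num.Theory.

Inductive term : Type :=
  | tvar : nat -> term
  | tzero : term
  | tplus : term -> term -> term.

Inductive formula : Type :=
  | fEq  : term -> term -> formula
  | fLt  : term -> term -> formula
  | fP   : term -> formula
  | fBot : formula
  | fNot : formula -> formula
  | fAnd : formula -> formula -> formula
  | fOr  : formula -> formula -> formula
  | fImp : formula -> formula -> formula
  | fAll : nat -> formula -> formula
  | fEx  : nat -> formula -> formula.

(* The equality symbol is interpreted by [seq_] (a congruence);
   for an ordinary structure take Leibniz equality.  This lets us present the
   ultraproduct directly on representatives. *)
Record Lstruct : Type := {
  carrier :> Type;
  seq_ : carrier -> carrier -> Prop;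
  sadd : carrier -> carrier -> carrier;
  szero : carrier;
  slt : carrier -> carrier -> Prop;
  sP : carrier -> Prop }.

Definition upd {M : Lstruct} (e : nat -> M) (i : nat) (x : M) : nat -> M :=
  fun j => if j == i then x else e j.

Fixpoint teval (M : Lstruct) (e : nat -> M) (t : term) : M :=
  match t with
  | tvar i => e i
  | tzero => szero M
  | tplus t1 t2 => sadd M (teval M e t1) (teval M e t2)
  end.

Fixpoint sat (M : Lstruct) (e : nat -> M) (f : formula) : Prop :=
  match f with
  | fEq t1 t2 => seq_ M (teval M e t1) (teval M e t2)
  | fLt t1 t2 => slt M (teval M e t1) (teval M e t2)
  | fP t => sP M (teval M e t)
  | fBot => False
  | fNot g => ~ sat M e g
  | fAnd g h => sat M e g /\ sat M e h
  | fOr g h => sat M e g \/ sat M e h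
  | fImp g h => sat M e g -> sat M e h
  | fAll i g => forall x : M, sat M (upd e i x) g
  | fEx i g => exists x : M, sat M (upd e i x) g
  end.

Definition DCI (M : Lstruct) : Prop :=
  forall (phi : formula) (v : nat) (e : nat -> M),
    let A := fun x : M => sat M (upd e v x) phi in
    ((exists s : M, forall x : M, slt M x s -> A x) /\
     (forall y : M, (forall x : M, slt M x y -> A x) ->
        exists u : M, slt M y u /\ forall x : M, slt M x u -> A x))
    -> forall y : M, A y.

Definition definable (M : Lstruct) (X : M -> Prop) : Prop :=
  exists (phi : formula) (v : nat) (e : nat -> M),
    forall x : M, X x <-> sat M (upd e v x) phi.

(* Pieces of a finite union: points, and open intervals with endpoints in
   M or +-infinity ([None]). *)
Inductive piece (M : Lstruct) : Type :=
  | ppoint : carrier M -> piece M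
  | pinterval : option (carrier M) -> option (carrier M) -> piece M.

Definition in_piece (M : Lstruct) (p : piece M) (x : M) : Prop :=
  match p with
  | ppoint c => seq_ M x c
  | pinterval lo hi =>
      (match lo with None => True | Some a => slt M a x end) /\
      (match hi with None => True | Some b => slt M x b end)
  end.

Definition o_minimal (M : Lstruct) : Prop :=
  forall X : M -> Prop, definable M X ->
    exists l : list (piece M),
      forall x : M, X x <-> exists2 p, List.In p l & in_piece M p x.

Definition ultrafilter (F : (nat -> Prop) -> Prop) : Prop :=
  [/\ F (fun _ => True),
      ~ F (fun _ => False),
      (forall A B : nat -> Prop, F A -> (forall n, A n -> B n) -> F B),
      (forall A B : nat -> Prop, F A -> F B -> F (fun n => A n /\ B n))
    & (forall A : nat -> Prop, F A \/ F (fun n => ~ A n))].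

Definition nonprincipal (F : (nat -> Prop) -> Prop) : Prop :=
  forall m : nat, ~ F (fun n => n = m).

Definition Pn (n : nat) (x : rat) : Prop :=
  exists k : nat, (k <= n)%N /\ x = (k%:R : rat).

(* The ultraproduct prod_n Q_n / F, presented on representatives nat -> rat,
   with equality interpreted as F-almost-everywhere equality. *)
Definition ultraQ (F : (nat -> Prop) -> Prop) : Lstruct := {|
  carrier := nat -> rat;
  seq_ := fun a b => F (fun n => a n = b n);
  sadd := fun a b n => (a n + b n)%R;
  szero := fun _ => 0%R;
  slt := fun a b => F (fun n => (a n < b n)%R);
  sP := fun a => F (fun n => Pn n (a n)) |}.

(* Main.v *)
Require Import Defs.
From mathcomp Require Import all_boot all_order all_algebra.
From mathcomp Require Import lra ring zify.
From Stdlib Require Import Classical ClassicalEpsilon FunctionalExtensionality.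
From Stdlib Require List.
Import Order.TTheory GRing.Theory Num.Theory.
Set Implicit Arguments.

Section Aux.
Local Open Scope ring_scope.

Definition env := nat -> rat.
Definition updr (e : env) (i : nat) (x : rat) : env := fun j => if j == i then x else e j.

Lemma updr_comm e i j a b : i != j -> updr (updr e i a) j b = updr (updr e j b) i a.
Proof.
move=> hij; apply: functional_extensionality => k; rewrite /updr.
case: (eqVneq k j) => hkj; case: (eqVneq k i) => hki //.
by move: hij; rewrite -hkj -hki eqxx.
Qed.

Lemma updr_idem e i a b : updr (updr e i a) i b = updr e i b.
Proof. apply: functional_extensionality => k; rewrite /updr; by case: (k == i). Qed.

Definition Aff (f : env -> rat) :=
  forall i, exists c, forall e z, f (updr e i z) = f (updr e i 0) + z * c.

Lemma Aff_const c : Aff (fun _ => c).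
Proof. by move=> i; exists 0 => e z; rewrite mulr0 addr0. Qed.

Lemma Aff_var j : Aff (fun e => e j).
Proof.
move=> i; exists (if j == i then 1 else 0) => e z; rewrite /updr.
by case: (j == i); rewrite ?mulr1 ?mulr0 ?add0r ?addr0.
Qed.

Lemma Aff_add f g : Aff f -> Aff g -> Aff (fun e => f e + g e).
Proof.
move=> hf hg i; have [c hc] := hf i; have [d hd] := hg i.
exists (c + d) => e z; rewrite hc hd; ring.
Qed.

Lemma Aff_opp f : Aff f -> Aff (fun e => - f e).
Proof. move=> hf i; have [c hc] := hf i; exists (- c) => e z; rewrite hc; ring. Qed.

Lemma Aff_sub f g : Aff f -> Aff g -> Aff (fun e => f e - g e).
Proof. move=> hf hg; exact: (Aff_add hf (Aff_opp hg)). Qed.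

Lemma Aff_mulr f a : Aff f -> Aff (fun e => f e * a).
Proof. move=> hf i; have [c hc] := hf i; exists (c * a) => e z; rewrite hc; ring. Qed.

Lemma Aff_zero_at f i : Aff f -> Aff (fun e => f (updr e i 0)).
Proof.
move=> hf j; case: (eqVneq j i) => [->|hji].
  by exists 0 => e z; rewrite !updr_idem mulr0 addr0.
have [c hc] := hf j; exists c => e z.
by rewrite (@updr_comm e j i z 0 hji) (@updr_comm e j i 0 0 hji) hc.
Qed.

Definition slope (f : env -> rat) i :=
  f (updr (fun _ => 0) i 1) - f (updr (fun _ => 0) i 0).

Lemma Aff_slope f i : Aff f -> forall e z, f (updr e i z) = f (updr e i 0) + z * slope f i.
Proof.
move=> hf e z; have [c hc] := hf i.
have -> : slope f i = c by rewrite /slope hc; ring.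
exact: hc.
Qed.

Definition Det (L : list (env -> rat)) (P : env -> Prop) :=
  forall e e', (forall f, List.In f L -> Num.sg (f e) = Num.sg (f e')) -> P e -> P e'.

Lemma Det_not L P : Det L P -> Det L (fun e => ~ P e).
Proof. move=> hd e e' hs hn hp; apply: hn; apply: (hd e') hp => f hf; by rewrite hs. Qed.

Lemma Det_mono L1 L2 P : (forall f, List.In f L1 -> List.In f L2) -> Det L1 P -> Det L2 P.
Proof. move=> hs hd e e' h; apply: hd => f hf; exact: h (hs f hf). Qed.

Lemma Det_ext L P Q : (forall e, P e <-> Q e) -> Det L P -> Det L Q.
Proof. move=> hpq hd e e' hs /hpq hp; apply/hpq; exact: hd hs hp. Qed.

Lemma sg_pos (x : rat) : Num.sg x = 1 -> 0 < x.
Proof. case: (ltgtP x 0) => h. by rewrite ltr0_sg. done. by move: h => ->; rewrite sgr0. Qed.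
Lemma sg_neg (x : rat) : Num.sg x = -1 -> x < 0.
Proof. case: (ltgtP x 0) => h //. by rewrite gtr0_sg. by move: h => ->; rewrite sgr0. Qed.
Lemma sg_zero (x : rat) : Num.sg x = 0 -> x = 0.
Proof. by move/eqP; rewrite sgr_eq0 => /eqP. Qed.

Lemma sg_bothpos (x y : rat) : 0 < x -> 0 < y -> Num.sg x = Num.sg y.
Proof. by move=> hx hy; rewrite !gtr0_sg. Qed.
Lemma sg_bothneg (x y : rat) : x < 0 -> y < 0 -> Num.sg x = Num.sg y.
Proof. by move=> hx hy; rewrite !ltr0_sg. Qed.

Lemma MaxEx (T : Type) (L : list T) (Q : T -> Prop) (w : T -> rat) :
  (exists f, List.In f L /\ Q f) ->
  exists f0, List.In f0 L /\ Q f0 /\ forall f, List.In f L -> Q f -> w f <= w f0.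
Proof.
elim: L => [|x L IH] [f [hf hq]] //=.
case: (classic (exists f, List.In f L /\ Q f)) => [hex|hnex].
  have [f0 [i0 [q0 m0]]] := IH hex.
  case: (classic (Q x)) => qx.
    case: (leP (w x) (w f0)) => h.
      exists f0; split; [by right|split=> // g [<-|hg] qg]; [done|exact: m0].
    exists x; split; [by left|split=> // g [<-|hg] qg]; first by [].
    exact: ltW (le_lt_trans (m0 g hg qg) h).
  exists f0; split; [by right|split=> // g [<-|hg] qg]; [done|exact: m0].
case: hf => [exf|hf]; last by exfalso; apply: hnex; exists f.
subst f; exists x; split; [by left|split=> // g [<-|hg] qg]; first by [].
by exfalso; apply: hnex; exists g.
Qed.

Lemma MinEx (T : Type) (L : list T) (Q : T -> Prop) (w : T -> rat) :
  (exists f, List.In f L /\ Q f) ->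
  exists f0, List.In f0 L /\ Q f0 /\ forall f, List.In f L -> Q f -> w f0 <= w f.
Proof.
move=> h; have [f0 [i0 [q0 m0]]] := @MaxEx _ _ _ (fun f => - w f) h.
exists f0; split=> //; split=> // f hf qf; rewrite -lerN2; exact: m0.
Qed.

Lemma order_match (T : Type) (L : list T) (a b : T -> rat) :
  (forall f h, List.In f L -> List.In h L -> Num.sg (a f - a h) = Num.sg (b f - b h)) ->
  forall z, exists z', forall f, List.In f L -> Num.sg (z - a f) = Num.sg (z' - b f).
Proof.
move=> H z.
case: (classic (exists f0, List.In f0 L /\ a f0 = z)) => [[f0 [hf0 <-]]|hne].
  by exists (b f0) => f hf; exact: H.
have hne' : forall f, List.In f L -> a f <> z by move=> f hf e; apply: hne; exists f.
have mono : forall f h, List.In f L -> List.In h L -> a f < a h -> b f < b h.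
  move=> f h hf hh hlt; have := H f h hf hh.
  rewrite (ltr0_sg (_ : a f - a h < 0)); last by lra.
  move/esym/sg_neg; lra.
case: (classic (exists f, List.In f L /\ a f < z)) => [hlo|hnlo];
case: (classic (exists f, List.In f L /\ z < a f)) => [hhi|hnhi].
- have [f0 [i0 [l0 m0]]] := @MaxEx _ _ _ b hlo.
  have [f1 [i1 [h1 m1]]] := @MinEx _ _ _ b hhi.
  have b01 : b f0 < b f1 by apply: mono => //; lra.
  exists ((b f0 + b f1) / 2) => f hf.
  case: (ltgtP (a f) z) => hfz.
  + have := m0 f hf hfz => hb; apply: sg_bothpos; lra.
  + have := m1 f hf hfz => hb; apply: sg_bothneg; lra.
  + by exfalso; exact: hne' hf hfz.
- have [f0 [i0 [l0 m0]]] := @MaxEx _ _ _ b hlo.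
  exists (b f0 + 1) => f hf.
  case: (ltgtP (a f) z) => hfz.
  + have := m0 f hf hfz => hb; apply: sg_bothpos; lra.
  + by exfalso; apply: hnhi; exists f.
  + by exfalso; exact: hne' hf hfz.
- have [f1 [i1 [h1 m1]]] := @MinEx _ _ _ b hhi.
  exists (b f1 - 1) => f hf.
  case: (ltgtP (a f) z) => hfz.
  + by exfalso; apply: hnlo; exists f.
  + have := m1 f hf hfz => hb; apply: sg_bothneg; lra.
  + by exfalso; exact: hne' hf hfz.
- exists 0 => f hf; exfalso.
  case: (ltgtP (a f) z) => hfz.
  + by apply: hnlo; exists f.
  + by apply: hnhi; exists f.
  + exact: hne' hf hfz.
Qed.

Lemma lin_id (g x c : rat) : c != 0 -> g + x * c = c * (x - (if c == 0 then 0 else - g / c)).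
Proof. move=> hc; rewrite (negbTE hc); field; exact: hc. Qed.

Lemma Det_ex L P i : (forall f, List.In f L -> Aff f) -> Det L P ->
  exists L', (forall f, List.In f L' -> Aff f) /\ Det L' (fun e => exists z, P (updr e i z)).
Proof.
move=> haff hdet.
pose gz (f : env -> rat) := fun e => f (updr e i 0).
pose rt (f : env -> rat) := fun e => if slope f i == 0 then 0 else - gz f e / slope f i.
exists (List.map gz L ++ List.flat_map (fun f => List.map (fun h => fun e => rt f e - rt h e) L) L).
split.
  have Art : forall f, List.In f L -> Aff (rt f).
    move=> f hf; rewrite /rt; case: (slope f i == 0); first exact: Aff_const.
    apply: Aff_mulr; apply: Aff_opp; exact: Aff_zero_at (haff f hf).
  move=> f hf; case: (List.in_app_or _ _ _ hf) => [/(List.in_map_iff _ _ _) [g [<- hg]]|/(List.in_flat_map _ _ _) [g [hg /(List.in_map_iff _ _ _) [h [<- hh]]]]].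
    exact: Aff_zero_at (haff g hg).
  exact: Aff_sub (Art g hg) (Art h hh).
move=> e e' hs [z hz].
have hgz : forall f, List.In f L -> Num.sg (gz f e) = Num.sg (gz f e').
  move=> f hf; apply: hs; apply: List.in_or_app; left; apply/List.in_map_iff; by exists f.
have hrt : forall f h, List.In f L -> List.In h L ->
    Num.sg (rt f e - rt h e) = Num.sg (rt f e' - rt h e').
  move=> f h hf hh; apply: (hs (fun e => rt f e - rt h e)).
  apply: List.in_or_app; right; apply/List.in_flat_map; exists f; split=> //.
  apply/List.in_map_iff; by exists h.
have [z' hz'] := @order_match _ L (fun f => rt f e) (fun f => rt f e') hrt z.
exists z'; apply: (hdet (updr e i z)) hz => f hf.
rewrite (Aff_slope i (haff f hf) e z) (Aff_slope i (haff f hf) e' z').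
case: (eqVneq (slope f i) 0) => hc.
  rewrite hc !mulr0 !addr0; exact: hgz.
rewrite (@lin_id _ z _ hc) (@lin_id _ z' _ hc) !sgrM.
congr (_ * _); exact: hz' f hf.
Qed.


Definition Qn (n : nat) : Lstruct := {|
  carrier := rat; seq_ := @eq rat; sadd := fun a b => a + b; szero := 0;
  slt := fun a b => a < b; sP := Pn n |}.

Lemma teval_Aff n t : Aff (fun e : env => teval (Qn n) e t).
Proof.
elim: t => [j||a IHa b IHb]; first exact: Aff_var; first exact: Aff_const.
exact: Aff_add IHa IHb.
Qed.

Fixpoint Plist (g : env -> rat) (m : nat) : list (env -> rat) :=
  (fun e => g e - m%:R) :: (match m with 0 => nil | m'.+1 => Plist g m' end).

Lemma in_Plist g m k : (k <= m)%N -> List.In (fun e => g e - k%:R) (Plist g m).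
Proof.
elim: m => [|m IH] hk /=.
  by left; move: hk; rewrite leqn0 => /eqP ->.
case: (ltngtP k m.+1) => h; last by left; rewrite h.
  by right; apply: IH.
by move: hk; rewrite leqNgt h.
Qed.

Lemma Plist_Aff g m f : Aff g -> List.In f (Plist g m) -> Aff f.
Proof.
move=> hg; elim: m => [|m IH] /= [<-|hf].
- exact: Aff_sub hg (Aff_const _).
- by [].
- exact: Aff_sub hg (Aff_const _).
- exact: IH.
Qed.

Lemma QE n phi : exists L, (forall f, List.In f L -> Aff f) /\ Det L (fun e => sat (Qn n) e phi).
Proof.
elim: phi => [t1 t2|t1 t2|t||g [L [hA hD]]|g [L1 [hA1 hD1]] h [L2 [hA2 hD2]]
  |g [L1 [hA1 hD1]] h [L2 [hA2 hD2]]|g [L1 [hA1 hD1]] h [L2 [hA2 hD2]]|i g [L [hA hD]]|i g [L [hA hD]]].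
- exists [:: fun e => teval (Qn n) e t1 - teval (Qn n) e t2]; split.
    by move=> f [<-|[]]; apply: Aff_sub; apply: teval_Aff.
  move=> e e' hs /= h; have := hs _ (or_introl erefl).
  rewrite h subrr sgr0 => /esym/sg_zero /eqP; rewrite subr_eq0 => /eqP //.
- exists [:: fun e => teval (Qn n) e t2 - teval (Qn n) e t1]; split.
    by move=> f [<-|[]]; apply: Aff_sub; apply: teval_Aff.
  move=> e e' hs /= h; have := hs _ (or_introl erefl).
  rewrite gtr0_sg ?subr_gt0 // => /esym/sg_pos; rewrite subr_gt0 //.
- exists (Plist (fun e => teval (Qn n) e t) n); split.
    move=> f; apply: Plist_Aff; exact: teval_Aff.
  move=> e e' hs /= [k [hk ek]]; exists k; split=> //.
  have := hs _ (@in_Plist (fun e => teval (Qn n) e t) n k hk).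
  rewrite ek subrr sgr0 => /esym/sg_zero /eqP; rewrite subr_eq0 => /eqP //.
- by exists nil; split.
- exists L; split=> //; exact: Det_not.
- exists (L1 ++ L2); split.
    by move=> f hf; case: (List.in_app_or _ _ _ hf) => [/hA1|/hA2].
  move=> e e' hs /= [h1 h2]; split.
    apply: (hD1 e) h1 => f hf; apply: hs; apply: List.in_or_app; by left.
  apply: (hD2 e) h2 => f hf; apply: hs; apply: List.in_or_app; by right.
- exists (L1 ++ L2); split.
    by move=> f hf; case: (List.in_app_or _ _ _ hf) => [/hA1|/hA2].
  move=> e e' hs /= [h1|h2]; [left|right].
    apply: (hD1 e) h1 => f hf; apply: hs; apply: List.in_or_app; by left.
  apply: (hD2 e) h2 => f hf; apply: hs; apply: List.in_or_app; by right.
- exists (L1 ++ L2); split.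
    by move=> f hf; case: (List.in_app_or _ _ _ hf) => [/hA1|/hA2].
  move=> e e' hs /= h12 h1.
  apply: (hD2 e); first by move=> f hf; apply: hs; apply: List.in_or_app; right.
  apply: h12; apply: (hD1 e') h1 => f hf; rewrite hs //; apply: List.in_or_app; by left.
- have := Det_ex i hA (Det_not hD) => [[L' [hA' hD']]].
  exists L'; split=> //.
  apply: Det_ext (Det_not hD') => e /=; split.
    by move=> h x; apply: NNPP => hn; apply: h; exists x.
  by move=> h [x hx]; apply: hx; exact: h x.
- have := Det_ex i hA hD => [[L' [hA' hD']]].
  by exists L'.
Qed.

Definition DCIat (M : Lstruct) (phi : formula) (v : nat) (e : nat -> M) : Prop :=
    let A := fun x : M => sat M (upd e v x) phi in
    ((exists s : M, forall x : M, slt M x s -> A x) /\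
     (forall y : M, (forall x : M, slt M x y -> A x) ->
        exists u : M, slt M y u /\ forall x : M, slt M x u -> A x))
    -> forall y : M, A y.

Lemma max_seed (s : list rat) (Q : rat -> Prop) x0 : Q x0 ->
  exists b, Q b /\ x0 <= b /\ forall r, List.In r s -> Q r -> r <= b.
Proof.
move=> q0; case: (classic (exists r, List.In r s /\ Q r)) => [hex|hn].
  have [r0 [i0 [qr0 m0]]] := @MaxEx _ _ _ id hex.
  case: (leP x0 r0) => h.
    by exists r0; split=> //; split.
  exists x0; split=> //; split=> // r hr qr; exact: le_trans (m0 r hr qr) (ltW h).
exists x0; split=> //; split=> // r hr qr; exfalso; apply: hn; by exists r.
Qed.

Lemma DCI_Qn n phi v (e : env) : DCIat (Qn n) phi v e.
Proof.
pose A := fun x : rat => sat (Qn n) (@upd (Qn n) e v x) phi.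
rewrite /DCIat /= => -[[s hs] hstep].
have [L [haff hdet]] := QE n phi.
pose rtv (f : env -> rat) := if slope f v == 0 then 0 else - f (updr e v 0) / slope f v.
pose B := List.map rtv L.
have key : forall x y, (forall r, List.In r B -> Num.sg (x - r) = Num.sg (y - r)) -> A x -> A y.
  move=> x y hxy; rewrite /A; apply: hdet => f hf.
  change (Num.sg (f (updr e v x)) = Num.sg (f (updr e v y))).
  rewrite (Aff_slope v (haff f hf) e x) (Aff_slope v (haff f hf) e y).
  case: (eqVneq (slope f v) 0) => hc; first by rewrite hc !mulr0 !addr0.
  rewrite (@lin_id _ x _ hc) (@lin_id _ y _ hc) !sgrM; congr (_ * _).
  apply: hxy; apply/List.in_map_iff; by exists f.
pose T := fun y : rat => forall x, x < y -> A x.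
have [b [Tb [sb bmax]]] := @max_seed B T s hs.
have [u [bu Tu]] := hstep b Tb.
case: (classic (exists r, List.In r B /\ b < r)) => [hex|hn].
  exfalso.
  have [r' [ir' [br' mr']]] := @MinEx _ _ _ id hex.
  have aux : forall m, b < m -> m < u -> m < r' -> forall x, u <= x -> x < r' -> A x.
    move=> m bm mu mr x ux xr; apply: (key m) (Tu m mu) => r hr.
    case: (leP r b) => hrb.
      apply: sg_bothpos; lra.
    have := mr' r hr hrb => /= hr'; apply: sg_bothneg; lra.
  have Tr' : T r'.
    move=> x hx; case: (ltP x u) => hxu; first exact: Tu.
    case: (leP u r') => hur.
      apply: (aux ((b + u) / 2)) => //; lra.
    apply: (aux ((b + r') / 2)) => //; lra.
  have := bmax r' ir' Tr'; lra.
move=> y; case: (ltP y u) => hyu; first exact: Tu.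
apply: (key ((b + u) / 2)); last by apply: Tu; lra.
move=> r hr; have hrb : r <= b.
  case: (leP r b) => // h; exfalso; apply: hn; by exists r.
apply: sg_bothpos; lra.
Qed.


Fixpoint tvb (t : term) : nat :=
  match t with tvar i => i.+1 | tzero => 0%N | tplus a b => maxn (tvb a) (tvb b) end.

Fixpoint fvb (f : formula) : nat :=
  match f with
  | fEq a b | fLt a b => maxn (tvb a) (tvb b)
  | fP a => tvb a
  | fBot => 0%N
  | fNot g => fvb g
  | fAnd g h | fOr g h | fImp g h => maxn (fvb g) (fvb h)
  | fAll i g | fEx i g => maxn i.+1 (fvb g)
  end.

Lemma teval_agree (M : Lstruct) t (e e' : nat -> M) :
  (forall j, (j < tvb t)%N -> e j = e' j) -> teval M e t = teval M e' t.
Proof.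
elim: t => [i||a IHa b IHb] /= h; first by apply: h.
  by [].
rewrite IHa ?IHb // => j hj; apply: h; lia.
Qed.

Lemma sat_agree (M : Lstruct) phi : forall (e e' : nat -> M),
  (forall j, (j < fvb phi)%N -> e j = e' j) -> (sat M e phi <-> sat M e' phi).
Proof.
elim: phi => [a b|a b|a||g IH|g IHg h IHh|g IHg h IHh|g IHg h IHh|i g IH|i g IH] e e' H /=; simpl in H.
- by rewrite (@teval_agree M a e e' (fun j hj => H j ltac:(lia))) (@teval_agree M b e e' (fun j hj => H j ltac:(lia))).
- by rewrite (@teval_agree M a e e' (fun j hj => H j ltac:(lia))) (@teval_agree M b e e' (fun j hj => H j ltac:(lia))).
- by rewrite (@teval_agree M a e e' (fun j hj => H j ltac:(lia))).
- by [].
- by rewrite (IH e e' H).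
- have h1 := IHg e e' (fun j hj => H j (ltac:(lia))).
  have h2 := IHh e e' (fun j hj => H j (ltac:(lia))); tauto.
- have h1 := IHg e e' (fun j hj => H j (ltac:(lia))).
  have h2 := IHh e e' (fun j hj => H j (ltac:(lia))); tauto.
- have h1 := IHg e e' (fun j hj => H j (ltac:(lia))).
  have h2 := IHh e e' (fun j hj => H j (ltac:(lia))); tauto.
- have H' : forall x j, (j < fvb g)%N -> upd e i x j = upd e' i x j.
    move=> x j hj; rewrite /upd; case: (j == i) => //; apply: H; lia.
  split=> hx x; [apply/(IH _ _ (H' x))|apply/(IH _ _ (H' x))]; exact: hx.
- have H' : forall x j, (j < fvb g)%N -> upd e i x j = upd e' i x j.
    move=> x j hj; rewrite /upd; case: (j == i) => //; apply: H; lia.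
  split=> -[x hx]; exists x; [apply/(IH _ _ (H' x))|apply/(IH _ _ (H' x))]; exact: hx.
Qed.

Definition dciN phi v := maxn (fvb phi) v.+1.

Definition dciF phi v : formula :=
  let s := dciN phi v in let y := (dciN phi v).+1 in let u := (dciN phi v).+2 in
  fImp (fAnd (fEx s (fAll v (fImp (fLt (tvar v) (tvar s)) phi)))
             (fAll y (fImp (fAll v (fImp (fLt (tvar v) (tvar y)) phi))
                           (fEx u (fAnd (fLt (tvar y) (tvar u))
                                        (fAll v (fImp (fLt (tvar v) (tvar u)) phi)))))))
       (fAll v phi).

Lemma upd_fresh (M : Lstruct) (e : nat -> M) s S v x phi : (fvb phi <= s)%N -> s != v ->
  (sat M (upd (upd e s S) v x) phi <-> sat M (upd e v x) phi).
Proof.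
move=> hs hsv; apply: sat_agree => j hj; rewrite /upd.
case: (j == v) => //; case: eqP => // hjs; lia.
Qed.

Lemma upd_vv (M : Lstruct) (e : nat -> M) i x : upd e i x i = x.
Proof. by rewrite /upd eqxx. Qed.
Lemma upd_vo (M : Lstruct) (e : nat -> M) i j x : j != i -> upd e i x j = e j.
Proof. by move=> h; rewrite /upd (negbTE h). Qed.

Lemma dciF_iff (M : Lstruct) phi v (e : nat -> M) : sat M e (dciF phi v) <-> DCIat M phi v e.
Proof.
rewrite /dciF /DCIat; cbn [sat teval].
set N := dciN phi v.
have hN : (fvb phi <= N)%N by rewrite /N /dciN; lia.
have hNv : N != v by apply/eqP; rewrite /N /dciN; lia.
have hN1v : N.+1 != v by apply/eqP; rewrite /N /dciN; lia.
have hN2v : N.+2 != v by apply/eqP; rewrite /N /dciN; lia.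
have hN12 : N.+1 != N.+2 by apply/eqP; lia.
have hN1 : (fvb phi <= N.+1)%N by lia.
have hN2 : (fvb phi <= N.+2)%N by lia.
split.
- move=> H [[s hs] hstep] y; apply: H; split.
    exists s => x hx; apply/(@upd_fresh M e N s v x phi hN hNv).
    rewrite upd_vv upd_vo // upd_vv in hx; exact: hs.
  move=> Y hY.
  have hY' : forall x, slt M x Y -> sat M (upd e v x) phi.
    move=> x hx; apply/(@upd_fresh M e N.+1 Y v x phi hN1 hN1v); apply: hY.
    by rewrite upd_vv upd_vo // upd_vv.
  have [U [hYU hU]] := hstep Y hY'.
  exists U; split.
    by rewrite (@upd_vo M _ N.+2 N.+1 U hN12) !upd_vv.
  move=> x hx; rewrite upd_vv upd_vo // upd_vv in hx.
  apply/(@upd_fresh M (upd e N.+1 Y) N.+2 U v x phi hN2 hN2v).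
  apply/(@upd_fresh M e N.+1 Y v x phi hN1 hN1v); exact: hU.
- move=> H [[S hS] hstep] x; apply: H; split.
    exists S => y hy; apply/(@upd_fresh M e N S v y phi hN hNv); apply: hS.
    by rewrite upd_vv upd_vo // upd_vv.
  move=> Y hY.
  have hY' : forall z, slt M (upd (upd e N.+1 Y) v z v) (upd (upd e N.+1 Y) v z N.+1) ->
      sat M (upd (upd e N.+1 Y) v z) phi.
    move=> z hz; rewrite upd_vv upd_vo // upd_vv in hz.
    apply/(@upd_fresh M e N.+1 Y v z phi hN1 hN1v); exact: hY.
  have [U [hYU hU]] := hstep Y hY'.
  exists U; split.
    by move: hYU; rewrite (@upd_vo M _ N.+2 N.+1 U hN12) !upd_vv.
  move=> z hz.
  have := hU z; rewrite upd_vv upd_vo // upd_vv => /(_ hz).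
  move/(@upd_fresh M (upd e N.+1 Y) N.+2 U v z phi hN2 hN2v).
  by move/(@upd_fresh M e N.+1 Y v z phi hN1 hN1v).
Qed.



Lemma Fmono F : ultrafilter F -> forall A B : nat -> Prop, F A -> (forall n, A n -> B n) -> F B.
Proof. by case. Qed.
Lemma Fand F : ultrafilter F -> forall A B : nat -> Prop, F A -> F B -> F (fun n => A n /\ B n).
Proof. by case. Qed.
Lemma Fnot F : ultrafilter F -> forall A : nat -> Prop, ~ F A <-> F (fun n => ~ A n).
Proof.
move=> hU A; have [hT hF hm ha hu] := hU; split.
  by move=> h; case: (hu A).
move=> h hA; apply: hF; apply: (hm _ (fun _ => False) (ha _ _ hA h)) => n [a b]; exact: b a.
Qed.
Lemma Fext F : ultrafilter F -> forall A B : nat -> Prop, (forall n, A n <-> B n) -> (F A <-> F B).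
Proof. move=> hU A B h; split=> hh; apply: Fmono hU _ _ hh _ => n /h //. Qed.

Definition proj (e : nat -> (nat -> rat)) (n : nat) : env := fun j => e j n.

Lemma teval_ultra F (e : nat -> ultraQ F) t n : teval (ultraQ F) e t n = teval (Qn n) (proj e n) t.
Proof. by elim: t => //= a IHa b IHb; rewrite IHa IHb. Qed.

Lemma proj_upd F (e : nat -> ultraQ F) i (x : ultraQ F) n :
  proj (@upd (ultraQ F) e i x) n = updr (proj e n) i (x n).
Proof. apply: functional_extensionality => j; rewrite /proj /upd /updr; by case: (j == i). Qed.

Lemma Los F : ultrafilter F -> forall phi (e : nat -> ultraQ F),
  sat (ultraQ F) e phi <-> F (fun n => sat (Qn n) (proj e n) phi).
Proof.
move=> hU; have [hT hF hm ha hu] := hU.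
elim=> [a b|a b|a||g IH|g IHg g2 IHh|g IHg g2 IHh|g IHg g2 IHh|i g IH|i g IH] e /=.
- by apply: Fext => // n; rewrite !teval_ultra.
- by apply: Fext => // n; rewrite !teval_ultra.
- by apply: Fext => // n; rewrite !teval_ultra.
- by split=> // h; apply: hF.
- rewrite IH; exact: Fnot.
- rewrite IHg IHh; split; first by case=> h1 h2; exact: ha.
  by move=> h; split; refine (hm _ _ h _) => n [].
- rewrite IHg IHh; split.
    by case=> h; refine (hm _ _ h _) => n; [left|right].
  move=> h; case: (classic (F (fun n => sat (Qn n) (proj e n) g))) => hg; first by left.
  right; move/(Fnot hU): hg => hg; refine (hm _ _ (ha _ _ hg h) _) => n [? []] //.
- rewrite IHg IHh; split.
    move=> h; case: (classic (F (fun n => sat (Qn n) (proj e n) g))) => hg.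
      by refine (hm _ _ (h hg) _) => n ? ?.
    by move/(Fnot hU): hg => hg; refine (hm _ _ hg _) => n ? ?.
  move=> h hg; refine (hm _ _ (ha _ _ h hg) _) => n [hi ?]; exact: hi.
- have IH' : forall x : ultraQ F, sat (ultraQ F) (upd e i x) g <->
      F (fun n => sat (Qn n) (updr (proj e n) i (x n)) g).
    move=> x; rewrite IH; apply: Fext => // n; by rewrite proj_upd.
  split.
    move=> H; apply: NNPP => hn; move/(Fnot hU): hn => hn.
    pose x := fun n => epsilon (inhabits (0 : rat))
      (fun q => ~ sat (Qn n) (updr (proj e n) i q) g).
    have hx : F (fun n => ~ sat (Qn n) (updr (proj e n) i (x n)) g).
      refine (hm _ _ hn _) => n hn'; apply: (epsilon_spec (inhabits (0 : rat))
        (fun q => ~ sat (Qn n) (updr (proj e n) i q) g)).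
      by apply: NNPP => hh; apply: hn' => q; apply: NNPP => hq; apply: hh; exists q.
    apply: hF; refine (hm _ _ (ha _ _ hx (proj1 (IH' x) (H x))) _) => n [a b]; exact: a b.
  move=> H x; apply/IH'; refine (hm _ _ H _) => n h; exact: h (x n).
- have IH' : forall x : ultraQ F, sat (ultraQ F) (upd e i x) g <->
      F (fun n => sat (Qn n) (updr (proj e n) i (x n)) g).
    move=> x; rewrite IH; apply: Fext => // n; by rewrite proj_upd.
  split.
    by case=> x /IH' hx; refine (hm _ _ hx _) => n h; exists (x n).
  move=> H.
  pose x := fun n => epsilon (inhabits (0 : rat)) (fun q => sat (Qn n) (updr (proj e n) i q) g).
  exists x; apply/IH'; refine (hm _ _ H _) => n hn.
  exact: (epsilon_spec (inhabits (0 : rat)) (fun q => sat (Qn n) (updr (proj e n) i q) g)).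
Qed.

Lemma DCI_ultra F : ultrafilter F -> DCI (ultraQ F).
Proof.
move=> hU phi v e; have [hT hF hm ha hu] := hU.
apply: (proj1 (dciF_iff (ultraQ F) phi v e)).
apply/(Los hU); refine (hm _ _ hT _) => n _.
apply/(dciF_iff (Qn n) phi v (proj e n)); exact: DCI_Qn.
Qed.


Lemma pigeon (T : Type) (G : T -> nat -> Prop) (l : seq T) :
  (forall p j j', G p j -> G p j' -> j = j') ->
  forall s : seq nat, uniq s -> (forall j, j \in s -> exists2 p, List.In p l & G p j) ->
  (size s <= size l)%N.
Proof.
move=> hG; elim: l => [|p l IH] s us hs /=.
  case: s us hs => [|j s] // _ hs; by have [p []] := hs j (mem_head j s).
case: (classic (exists j0, j0 \in s /\ G p j0)) => [[j0 [j0s gj0]]|hn].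
  have h := IH (rem j0 s) (rem_uniq j0 us).
  have : (size (rem j0 s) <= size l)%N.
    apply: h => j; rewrite mem_rem_uniq // => /andP [hne js].
    have [p' hin gp'] := hs j js; case: hin => [ep|hp'].
      by subst p'; move: hne; rewrite (hG _ _ _ gp' gj0) eqxx.
    by exists p'.
  rewrite size_rem //; have : (0 < size s)%N by case: (s) j0s.
  by case: (size s) => [|m] //= _; rewrite ltnS.
have : (size s <= size l)%N.
  apply: IH => // j js; have [p' hin gp'] := hs j js; case: hin => [ep|hp'].
    by subst p'; exfalso; apply: hn; exists j.
  by exists p'.
move=> *; lia.
Qed.

Lemma Fge F : ultrafilter F -> nonprincipal F -> forall k, F (fun n => (k <= n)%N).
Proof.
move=> hU hnp; have [hT hF hm ha hu] := hU.
elim=> [|k IH]; first by refine (hm _ _ hT _).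
have h2 : F (fun n => ~ n = k) by apply/(Fnot hU); exact: hnp.
refine (hm _ _ (ha _ _ IH h2) _) => n [h1 h3]; lia.
Qed.

Lemma nat_gap (k k' : nat) (d : rat) : (k%:R : rat) - k'%:R = d -> 0 < d -> d < 1 -> False.
Proof.
move=> hd d0 d1; case: (ltngtP k' k) => h.
- have : ((k'.+1)%:R : rat) <= k%:R by rewrite ler_nat.
  rewrite -natr1; lra.
- have : (k%:R : rat) < k'%:R by rewrite ltr_nat.
  lra.
- subst k'; move: hd; rewrite subrr; lra.
Qed.

Lemma no_interval F : ultrafilter F -> forall lo hi (x : nat -> rat),
  F (fun n => Pn n (x n)) -> in_piece (ultraQ F) (pinterval (ultraQ F) lo hi) x ->
  exists y : nat -> rat, in_piece (ultraQ F) (pinterval (ultraQ F) lo hi) y /\ ~ F (fun n => Pn n (y n)).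
Proof.
move=> hU lo hi x hx [hlo hhi]; have [hT hF hm ha hu] := hU.
pose la : nat -> Prop := fun n => match lo with Some a => a n < x n | None => True end.
have hla : F la by rewrite /la; case: (lo) hlo => [a|] h //.
pose d n := match lo with
  | Some a => if x n - a n < 1 then (x n - a n) / 2 else 1 / 2
  | None => 1 / 2 end.
have hd : forall n, la n -> 0 < d n /\ d n < 1 /\
    (match lo with Some a => a n < x n - d n | None => True end).
  move=> n; rewrite /la /d; case: (lo) => [a|] h.
    case: (ltP (x n - a n) 1) => hc; lra.
  lra.
exists (fun n => x n - d n); split.
  split.
    move: hd; rewrite /la; case: (lo) hlo => [a|] //= hlo hd.
    by refine (hm _ _ hlo _) => n hn; have [_ [_ h]] := hd n hn.
  case: (hi) hhi => [b|] //= hhi.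
  refine (hm _ _ (ha _ _ hhi hla) _) => n [h1 h2]; have [h3 _] := hd n h2; lra.
move=> hy; apply: hF.
refine (hm _ _ (ha _ _ hx (ha _ _ hy hla)) _) => n [[k [_ ek]] [[k' [_ ek']] hl]].
have [d0 [d1 _]] := hd n hl.
apply: (@nat_gap k k' (d n)) => //; rewrite -ek -ek'; ring.
Qed.

Lemma not_omin F : ultrafilter F -> nonprincipal F -> ~ o_minimal (ultraQ F).
Proof.
move=> hU hnp hom; have [hT hF hm ha hu] := hU.
have hdef : definable (ultraQ F) (sP (ultraQ F)).
  by exists (fP (tvar 0)), 0%N, (fun _ _ => 0).
have [l hl] := hom _ hdef.
pose cst (k : nat) : nat -> rat := fun _ => k%:R.
have hPk : forall k, sP (ultraQ F) (cst k).
  move=> k; refine (hm _ _ (Fge hU hnp k) _) => n hn; by exists k.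
pose G := fun p j => List.In p l /\ in_piece (ultraQ F) p (cst j).
have hG : forall p j j', G p j -> G p j' -> j = j'.
  move=> p j j' [ip gj] [_ gj']; case: p ip gj gj' => [c|lo hi] ip gj gj'.
    case: (eqVneq j j') => // hne; exfalso; apply: hF.
    refine (hm _ _ (ha _ _ gj gj') _) => n [h1 h2].
    have : (j%:R : rat) = j'%:R by rewrite /cst /= in h1 h2; rewrite h1 h2.
    by move/eqP; rewrite eqr_nat (negbTE hne).
  exfalso; have [y [iny hny]] := no_interval hU (hPk j) gj.
  apply: hny; apply: (proj2 (hl y)); by exists (pinterval (ultraQ F) lo hi).
suff: (size (iota 0 (size l).+1) <= size l)%N by rewrite size_iota ltnn.
apply: (@pigeon _ G l hG) => [|j _]; first exact: iota_uniq.
have [p ip gp] := proj1 (hl (cst j)) (hPk j).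
by exists p.
Qed.

End Aux.

Theorem mainTheorem6 (F : (nat -> Prop) -> Prop) :
  ultrafilter F -> nonprincipal F ->
  DCI (ultraQ F) /\ ~ o_minimal (ultraQ F).
Proof.
move=> hU hnp; split; [exact: DCI_ultra | exact: not_omin].
Qed.
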